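(* Suppose $A$ is a finite set and $E_1,E_2,\ldots,E_\ell$ are $\ell>1$ subsets of $A$ such that: (i) for all $1\leq i<\ell$, $E_i\not\subseteq E_{i+1}$ and $E_{i+1}\not\subseteq E_i$; (ii) for all $a\in A$ and $1\leq i<j\leq\ell$, if $a\in E_i\cap E_j$ then $a\in E_k$ for all $i\leq k\leq j$. Then $\ell\leq|A|$. *)

(* Defs.v *)
From mathcomp Require Import all_boot.
Set Implicit Arguments.
Unset Strict Implicit.
Unset Printing Implicit Defensive.

(* Main.v *)
Require Import Defs.
From mathcomp Require Import all_boot.

(* Sets E_1..E_l are indexed 0..l-1 by E : nat -> {set A}; only indices < l matter. *)
Theorem lemma18 (A : finType) (l : nat) (E : nat -> {set A}) :
  1 < l ->
  (forall i, i.+1 < l -> ~~ (E i \subset E i.+1) /\ ~~ (E i.+1 \subset E i)) ->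
  (forall (a : A) i j, i < j -> j < l -> a \in E i -> a \in E j ->
     forall k, i <= k -> k <= j -> a \in E k) ->
  l <= #|A|.
Proof.
move=> hl H1 H2.
have ex : forall i : 'I_l, exists a : A, (a \in E i) && ((i.+1 < l) ==> (a \notin E i.+1)).
  move=> [i hi] /=.
  case: (ltnP i.+1 l) => hil.
    have [/subsetPn [a ha hb] _] := H1 i hil.
    by exists a; rewrite ha hb.
  have i0 : 0 < i by rewrite -ltnS; exact: leq_trans hl hil.
  have hi' : i.-1.+1 < l by rewrite prednK.
  have [_ /subsetPn [a ha _]] := H1 _ hi'.
  by exists a; rewrite -(prednK i0) ha.
have [f hf] := fin_all_exists ex.
have inj : injective f.
  move=> x y hxy; apply/eqP; apply/negPn/negP => hne.
  wlog lt : x y hxy hne / x < y.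
    move=> W; case: (ltngtP x y) => c; first exact: (W x y).
      by apply: (W y x) => //; rewrite eq_sym.
    by move: hne; rewrite (val_inj c) eqxx.
  move: (hf x) (hf y) => /andP [ax bx] /andP [ay _].
  have xl : x.+1 < l by apply: leq_ltn_trans (ltn_ord y).
  move: bx; rewrite xl /= => /negP; apply.
  by apply: (H2 (f x) x y lt (ltn_ord y) ax) => //; rewrite hxy.
by have := leq_card f inj; rewrite card_ord.
Qed.
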